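(* Let $f\in\mathcal{F}$, let $A$ be a finite subset of $\mathbb{C}$ and let $b\in\mathbb{C}$. Assume that $A\subset f^{-1}(E)$ or $b\in\mathbb{C}\setminus A^{\mathrm{sym}}$. Then for every $\varepsilon>0$ there exists $g\in\mathcal{F}(f,A)$ such that $d_{\mathcal{F}}(f,g)<\varepsilon$ and $g(b)\in E$.
   Context: $\mathcal{F}$ is a Fréchet space of real and even entire maps (i.e. $f(\bar z)=\overline{f(z)}$ and $f(-z)=f(z)$) containing all real and even polynomial maps, whose topology is finer than the topology of local uniform convergence on $\mathbb{C}$; $(\|\cdot\|_j)_{j\ge0}$ is a sequence of seminorms defining its topology and $d_{\mathcal{F}}(f,g)=\sum_{j\ge0}2^{-j}\min\{1,\|f-g\|_j\}$. $E$ is a countable dense subset of $\mathbb{C}$, symmetric with respect to the real and imaginary axes, with $E\cap(\mathbb{R}\cup i\mathbb{R})$ dense in $\mathbb{R}\cup i\mathbb{R}$. For $f\in\mathcal{F}$ and $A\subseteq\mathbb{C}$, $\mathcal{F}(f,A)=\{g\in\mathcal{F}: g|_A=f|_A\text{ and } g'|_A=f'|_A\}$. For $A\subseteq\mathbb{C}$, $A^{\mathrm{sym}}=A\cup\bar A\cup(-A)\cup(-\bar A)$, where $\bar A$ is the complex conjugate of $A$. *)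

(* Defs.v *)
From HB Require Import structures.
From mathcomp Require Import all_boot all_order all_algebra.
From mathcomp Require Import all_classical all_reals all_analysis.
From mathcomp Require Import complex.
Import Order.TTheory GRing.Theory Num.Theory.
Import numFieldNormedType.Exports.
Set Implicit Arguments.
Unset Strict Implicit.
Unset Printing Implicit Defensive.
Local Open Scope ring_scope.
Local Open Scope classical_set_scope.

(* The complex numbers C = R[i] over a real field R : realType, seen as a
   numClosedFieldType (hence a normed module over itself, so that [derivable]
   and ['D_1] below are complex derivatives). *)
Definition CC (R : realType) : numClosedFieldType := R[i].

Section Defs.
Variable R : realType.
Local Notation C := (CC R).

Definition entire (f : C -> C) : Prop := forall z : C, derivable f z 1.

Definition real_map (f : C -> C) : Prop := forall z : C, f (z^*) = (f z)^*.

Definition even_map (f : C -> C) : Prop := forall z : C, f (- z) = f z.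

Definition dF (sn : nat -> (C -> C) -> R) (f g : C -> C) : R :=
  limn (series (fun j : nat => 2 ^- j * Num.min 1 (sn j (fun z => f z - g z)))).

Record frechet_space (F : set (C -> C)) (sn : nat -> (C -> C) -> R) : Prop := {
  fs_entire : forall f, F f -> entire f;
  fs_real : forall f, F f -> real_map f;
  fs_even : forall f, F f -> even_map f;
  fs_add : forall f g, F f -> F g -> F (fun z => f z + g z);
  fs_scale : forall (r : R) f, F f -> F (fun z => (r%:C)%C * f z);
  fs_poly : forall p : {poly C},
      real_map (fun z => p.[z]) -> even_map (fun z => p.[z]) -> F (fun z => p.[z]);
  fs_sn_ge0 : forall j f, F f -> 0 <= sn j f;
  fs_sn_triangle : forall j f g, F f -> F g ->
      sn j (fun z => f z + g z) <= sn j f + sn j g;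
  fs_sn_hom : forall j (r : R) f, F f ->
      sn j (fun z => (r%:C)%C * f z) = `|r| * sn j f;
  fs_separated : forall f, F f -> (forall j, sn j f = 0) -> f = (fun _ => 0);
  fs_complete : forall u : nat -> (C -> C), (forall n, F (u n)) ->
      (forall e : R, 0 < e -> exists N : nat, forall m n : nat,
          (N <= m)%N -> (N <= n)%N -> dF sn (u m) (u n) < e) ->
      exists2 h, F h & forall e : R, 0 < e -> exists N : nat, forall n : nat,
          (N <= n)%N -> dF sn (u n) h < e;
  (* the topology of F is finer than that of local uniform convergence on C *)
  fs_finer : forall f, F f -> forall rho eps : C, 0 < rho -> 0 < eps ->
      exists2 delta : R, 0 < delta & forall g, F g -> dF sn f g < delta ->
        forall z : C, `|z| <= rho -> `|f z - g z| < eps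
}.

Definition on_axes (z : C) : Prop := z \is Num.real \/ 'Re z = 0.

Record E_set (E : set C) : Prop := {
  E_countable : countable E;
  E_dense : dense E;
  E_sym_real : forall z, E z -> E (z^*);
  E_sym_imag : forall z, E z -> E (- z^*);
  E_axes_dense : forall x : C, on_axes x -> forall eps : C, 0 < eps ->
      exists2 e : C, E e /\ on_axes e & `|e - x| < eps
}.

Definition F_fix (F : set (C -> C)) (f : C -> C) (A : set C) : set (C -> C) :=
  [set g | F g /\ forall a, A a -> g a = f a /\ 'D_1 g a = 'D_1 f a].

Definition sym_set (A : set C) : set C :=
  A `|` (fun z => z^*) @` A `|` (fun z => - z) @` A `|` (fun z => - z^*) @` A.

End Defs.

(* Main.v *)
Require Import Defs.
From HB Require Import structures.
From mathcomp Require Import all_boot all_order all_algebra.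
From mathcomp Require Import all_classical all_reals all_analysis.
From mathcomp Require Import complex.
From mathcomp Require Import ring lra.
Import Order.TTheory GRing.Theory Num.Theory.
Import numFieldNormedType.Exports.
Local Open Scope ring_scope.
Local Open Scope classical_set_scope.
Lemma hornerD_extK (K : numFieldType) (p : {poly K}) r :
  horner (p * 'X + r%:P) = (horner p * id) + cst r.
Proof. by apply/funext => y /=; rewrite !(hornerE,fctE). Qed.

Lemma derivable_hornerK (K : numFieldType) (p : {poly K}) (x : K) :
  derivable (horner p) x 1.
Proof.
elim/poly_ind: p => [|p r ih].
  have -> : horner (0 : {poly K}) = cst 0 by apply/funext => y; rewrite horner0.
  exact: derivable_cst.
rewrite hornerD_extK; apply: derivableD; last exact: derivable_cst.
apply: derivableM => //; exact: derivable_id.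
Qed.

Lemma derive_hornerK (K : numFieldType) (p : {poly K}) (x : K) :
  'D_1 (horner p) x = p^`().[x].
Proof.
elim/poly_ind: p => [|p r ih].
  have -> : horner (0 : {poly K}) = cst 0 by apply/funext => y; rewrite horner0.
  by rewrite derive_cst deriv0 horner0.
rewrite hornerD_extK deriveD; last exact: derivable_cst.
  rewrite derive_cst addr0 deriveM; last exact: derivable_id.
    rewrite derive_id ih derivD derivC addr0 derivM derivX !hornerE /=.
    by rewrite /GRing.scale /= mulr1 addrC mulrC.
  exact: derivable_hornerK.
apply: derivableM; [exact: derivable_hornerK|exact: derivable_id].
Qed.


Lemma geo_tail_eq (R : realFieldType) (N k : nat) :
  \sum_(N <= j < N + k) (2:R)^-j + 2 * 2^-(N+k) = 2 * 2^-N.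
Proof.
elim: k => [|k IH]; first by rewrite addn0 big_geq // add0r.
rewrite addnS big_nat_recr /=; last by rewrite leq_addr.
rewrite -IH -addrA; congr (_ + _).
rewrite exprS invfM; field. all: by rewrite ?expf_neq0 ?pnatr_eq0.
Qed.

Lemma geo_tail_le (R : realFieldType) (N n : nat) :
  \sum_(N <= j < n) (2:R)^-j <= 2 * 2^-N.
Proof.
case: (leqP n N) => h; first by rewrite big_geq // mulr_ge0 // invr_ge0 exprn_ge0.
have -> : n = (N + (n - N))%N by rewrite subnKC // ltnW.
rewrite -(geo_tail_eq R N (n - N)) lerDl mulr_ge0 // invr_ge0 exprn_ge0 //.
Qed.

Lemma pow2_inv_le1 (R : realFieldType) (j : nat) : (2:R)^-j <= 1.
Proof. by rewrite invf_le1 ?exprn_gt0 // exprn_ege1 // ler1n. Qed.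

Lemma series_small (R : realType) (M : nat -> R) :
  (forall j, 0 <= M j) -> forall eps : R, 0 < eps -> exists2 eta : R, 0 < eta &
  forall (x : nat -> R) (t : R), 0 <= t -> t < eta ->
   (forall j, 0 <= x j <= t * M j) ->
   limn (series (fun j => 2 ^- j * Num.min 1 (x j))) < eps.
Proof.
move=> M0 eps eps0.
pose N := (Num.trunc (4 / eps)).+1.
have hN : 2 * 2^-N < eps / 2.
  have h1 : 4 / eps < N%:R by exact: truncnS_gt.
  have h2 : (N%:R : R) < 2 ^+ N.
    by rewrite -natrX ltr_nat ltn_expl.
  have h3 : 4 < eps * 2 ^+ N.
    by rewrite mulrC -ltr_pdivrMr // (lt_trans h1 h2).
  have p2 : 0 < (2:R) ^+ N by rewrite exprn_gt0.
  rewrite ltr_pdivrMr // mulrAC.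
  set u := eps * 2 ^+ N in h3 *. lra.
pose K := \sum_(0 <= j < N) M j.
have K0 : 0 <= K by rewrite sumr_ge0.
exists (eps / (2 * (K + 1))).
  by rewrite divr_gt0 // mulr_gt0 // ltr_pwDr.
move=> x t t0 teta hx.
set a := fun j => _.
have a0 : forall j, 0 <= a j.
  move=> j; rewrite /a mulr_ge0 ?invr_ge0 ?exprn_ge0 //.
  by rewrite le_min ler01 /=; case/andP: (hx j).
have aleM : forall j, a j <= t * M j.
  move=> j; rewrite /a; case/andP: (hx j) => _ h.
  apply: le_trans h; apply: (@le_trans _ _ (Num.min 1 (x j))).
    rewrite -[X in _ <= X]mul1r ler_wpM2r ?pow2_inv_le1 //.
    by rewrite le_min ler01 /=; case/andP: (hx j).
  by rewrite ge_min lexx orbT.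
have ale2 : forall j, a j <= 2^-j.
  move=> j; rewrite /a -[X in _ <= X]mulr1 ler_wpM2l ?invr_ge0 ?exprn_ge0 //.
  by rewrite ge_min lexx.
have bound : forall n, series a n <= t * K + 2 * 2^-N.
  move=> n; rewrite seriesEnat /=.
  apply: (@le_trans _ _ (\sum_(0 <= j < maxn n N) a j)).
    rewrite (big_cat_nat _ (leq_maxl n N)) //= lerDl.
    by apply: sumr_ge0 => j _.
  rewrite (big_cat_nat _ (leq_maxr n N)) //=.
  apply: lerD.
    rewrite /K mulr_sumr; apply: ler_sum => j _; exact: aleM.
  apply: le_trans (geo_tail_le R N (maxn n N)).
  by apply: ler_sum => j _.
have cv : cvgn (series a).
  apply: nondecreasing_is_cvgn.
    move=> m n mn; rewrite !seriesEnat /=.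
    by apply: nondecreasing_series => // k _ _.
  by exists (t * K + 2 * 2^-N) => y [n _ <-].
apply: (@le_lt_trans _ _ (t * K + 2 * 2^-N)).
  apply: limr_le => //; exact: nearW.
have tK : t * K <= eps / 2.
  apply: (@le_trans _ _ (eps / (2 * (K + 1)) * K)).
    by rewrite ler_wpM2r // ltW.
  apply: (@le_trans _ _ (eps / (2 * (K + 1)) * (K + 1))).
    rewrite ler_wpM2l ?lerDl //.
    by rewrite divr_ge0 ?ltW // mulr_gt0 // ltr_pwDr.
  rewrite le_eqVlt; apply/orP; left; apply/eqP; field.
  by rewrite lt0r_neq0 // ltr_pwDr.
lra.
Qed.


Definition qfac (R : realType) (a : CC R) : {poly CC R} :=
  ('X^2 - (a^+2)%:P)^+2 * ('X^2 - ((a^*)^+2)%:P)^+2.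
Arguments qfac {R}.
Definition qpoly (R : realType) (s : seq (CC R)) : {poly CC R} :=
  \prod_(a <- s) qfac a.
Arguments qpoly {R}.

Lemma qpoly_horner (R : realType) (s : seq (CC R)) z :
  (qpoly s).[z] = \prod_(a <- s) ((z^+2 - a^+2)^+2 * (z^+2 - (a^*)^+2)^+2).
Proof.
rewrite /qpoly horner_prod; apply: eq_bigr => a _.
by rewrite /qfac !hornerE.
Qed.

Lemma qpoly_even (R : realType) (s : seq (CC R)) : even_map (horner (qpoly s)).
Proof. by move=> z /=; rewrite !qpoly_horner sqrrN. Qed.

Lemma qpoly_real (R : realType) (s : seq (CC R)) : real_map (horner (qpoly s)).
Proof.
move=> z /=; rewrite !qpoly_horner rmorph_prod; apply: eq_bigr => a _ /=.
rewrite rmorphM !rmorphXn !rmorphB !rmorphXn /= conjCK mulrC. done.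
Qed.

Lemma hornerMX2 (K : comNzRingType) (p : {poly K}) z : (p * 'X^2).[z] = p.[z] * z^+2.
Proof. by rewrite hornerM hornerXn. Qed.

Lemma qpolyX_even (R : realType) (s : seq (CC R)) : even_map (horner (qpoly s * 'X^2)).
Proof. by move=> z /=; rewrite !hornerMX2 -(qpoly_even _ s z) /= sqrrN. Qed.

Lemma qpolyX_real (R : realType) (s : seq (CC R)) : real_map (horner (qpoly s * 'X^2)).
Proof. by move=> z /=; rewrite !hornerMX2 (qpoly_real _ s z) rmorphM rmorphXn. Qed.

Lemma qpoly_root (R : realType) (s : seq (CC R)) a : a \in s ->
  exists r, qpoly s = ('X - a%:P)^+2 * r.
Proof.
move=> ain; rewrite /qpoly (big_rem a ain) /= /qfac.
exists (('X + a%:P)^+2 * ('X^2 - ((a^*)^+2)%:P)^+2 * \prod_(y <- rem a s) qfac y).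
have -> : 'X^2 - (a^+2)%:P = ('X - a%:P) * ('X + a%:P) :> {poly CC R}.
  by rewrite rmorphXn /=; ring.
ring.
Qed.

Lemma qpoly_neq0 (R : realType) (s : seq (CC R)) b :
  (forall a, a \in s -> [/\ b != a, b != - a, b != a^* & b != - a^*]) ->
  (qpoly s).[b] != 0.
Proof.
move=> H; rewrite qpoly_horner prodf_seq_neq0; apply/allP => a /H [h1 h2 h3 h4] /=.
have e : forall c : CC R, b != c -> b != - c -> b^+2 - c^+2 != 0.
  move=> c n1 n2; have -> : b^+2 - c^+2 = (b - c) * (b + c) by ring.
  by rewrite mulf_neq0 // ?subr_eq0 // addr_eq0.
by rewrite mulf_neq0 // expf_neq0 // e.
Qed.

Lemma root2_horner (K : comNzRingType) (a : K) r :
  (('X - a%:P)^+2 * r).[a] = 0 /\ (('X - a%:P)^+2 * r)^`().[a] = 0.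
Proof.
split; first by rewrite !hornerE subrr expr0n mul0r.
rewrite derivM deriv_exp derivXsubC !hornerE subrr /=.
by rewrite expr1 add0r subrr expr0n /= !mul0r addr0.
Qed.


Lemma normCc (R : realType) (a b : R) :
  `|(a +i* b)%C : CC R| = ((Num.sqrt (a ^+ 2 + b ^+ 2))%:C)%C.
Proof. by rewrite normc_def. Qed.

Lemma normCR (R : realType) (a : R) : `|(a%:C)%C : CC R| = ((`|a|)%:C)%C.
Proof. by rewrite normCc expr0n /= addr0 sqrtr_sqr. Qed.

Lemma sqrt_ge_l (R : realType) (a b : R) : `|a| <= Num.sqrt (a ^+ 2 + b ^+ 2).
Proof.
rewrite -sqrtr_sqr ler_sqrt ?addr_ge0 ?sqr_ge0 // lerDl sqr_ge0 //.
Qed.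

Lemma sqrt_ge_r (R : realType) (a b : R) : `|b| <= Num.sqrt (a ^+ 2 + b ^+ 2).
Proof. by rewrite addrC sqrt_ge_l. Qed.

Lemma ReC (R : realType) (a b : R) : 'Re ((a +i* b)%C : CC R) = ((a%:C)%C).
Proof.
rewrite ReE.
have -> : ((a +i* b)%C : CC R) + ((a +i* b)%C : CC R)^* = 2%:R * ((a%:C)%C).
  by rewrite (addcJ (a +i* b)%C).
by rewrite [_ / 2]mulrC mulKf // pnatr_eq0.
Qed.

Lemma conj_real (R : realType) (z : CC R) : z^* = z -> z = ((complex.Re z)%:C)%C.
Proof.
case: z => a b /= h; have hb : - b = b by case: h.
by rewrite /= (_ : b = 0) //; lra.
Qed.

Lemma value_axes (R : realType) (E : set (CC R)) (hE : E_set E) (r u eta : R) :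
  0 < eta -> u != 0 -> exists d1 : R, `|d1| < eta /\ E ((r%:C)%C + (u%:C)%C * (d1%:C)%C).
Proof.
move=> eta0 u0.
have nu0 : 0 < `|u| by rewrite normr_gt0.
pose rho := eta * `|u| / 4.
have rho0 : 0 < rho by rewrite /rho divr_gt0 // mulr_gt0.
pose xr := r + (if 0 <= r then rho else - rho).
have hxr : rho <= `|xr|.
  rewrite /xr; case: ifP => h.
    by rewrite ger0_norm; lra.
  move/negbT: h; rewrite -ltNge => h.
  by rewrite ltr0_norm; lra.
have hxr2 : `|xr - r| = rho.
  rewrite /xr; case: ifP => _; rewrite addrC addKr ?normrN gtr0_norm //.
have axr : on_axes ((xr%:C)%C : CC R) by left; apply/complex_realP; exists xr.
have rho0C : (0 : CC R) < (rho%:C)%C by rewrite ltcR.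
have [e [Ee axe] hd] := E_axes_dense hE axr rho0C.
case: e Ee axe hd => k m Ee axe hd.
have hsub : ((k +i* m)%C : CC R) - (xr%:C)%C = ((k - xr) +i* (m - 0))%C by [].
rewrite hsub normCc ltcR in hd.
have hk : `|k - xr| < rho := le_lt_trans (sqrt_ge_l _ _ _) hd.
have m0 : m = 0.
  case: axe => [hreal | hre].
    by move: hreal; rewrite complex_real => /eqP.
  exfalso; move: hre; rewrite ReC => /(congr1 (@complex.Re R)) /= k0.
  by move: hk; rewrite k0 sub0r normrN => hk; lra.
subst m.
exists ((k - r) / u); split.
  rewrite normrM normrV ?unitfE // ltr_pdivrMr //.
  have := ler_distD xr k r; rewrite hxr2 => h.
  have hr4 : rho * 4 = eta * `|u| by rewrite /rho; field.
  lra.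
suff -> : ((r%:C)%C + (u%:C)%C * (((k - r) / u)%:C)%C : CC R) = (k%:C)%C by [].
by rewrite -rmorphM -rmorphD /=; congr (_%:C)%C; field.
Qed.

Lemma value_gen (R : realType) (E : set (CC R)) (hE : E_set E) (fb qb : CC R)
    (b1 b2 eta : R) :
  0 < eta -> qb != 0 -> b2 != 0 ->
  exists d1 d2 : R, `|d1| + `|d2| < eta /\
    E (fb + qb * ((d1%:C)%C + (d2%:C)%C * ((b1 +i* b2)%C : CC R))).
Proof.
move=> eta0 qb0 b20.
have nb2 : 0 < `|b2| by rewrite normr_gt0.
pose K := 1 + (1 + `|b1|) / `|b2|.
have K0 : 0 < K by rewrite /K ltr_pwDl // divr_ge0 // addr_ge0.
move: qb0; case Hq: qb => [q1 q2] qb0.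
pose nq := Num.sqrt (q1 ^+ 2 + q2 ^+ 2).
have nqE : `|qb| = (nq%:C)%C by rewrite Hq normCc.
have nq0 : 0 < nq by rewrite -ltcR -nqE normr_gt0 Hq.
pose rho := eta * nq / (2 * K).
have rho0 : 0 < rho by rewrite /rho divr_gt0 ?mulr_gt0.
have rho0C : (0 : CC R) < (rho%:C)%C by rewrite ltcR.
have [e [be Ee]] := E_dense hE (ex_intro _ fb (ballxx fb rho0C))
  (ball_open fb (rho%:C)%C).
move: be; rewrite /ball /= distrC => be.
pose t := (e - fb) / qb.
have ht : qb * t = e - fb by rewrite /t mulrC divfK // Hq.
have hnt : `|qb| * `|t| = `|e - fb| by rewrite -normrM ht.
move: ht hnt; case: t => t1 t2 ht hnt.
pose nt := Num.sqrt (t1 ^+ 2 + t2 ^+ 2).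
rewrite normCc -/nt nqE -rmorphM in hnt.
have hnt2 : nq * nt < rho by rewrite -ltcR hnt.
have hntK : nt * K * 2 < eta.
  have e1 : rho * (2 * K) = eta * nq by rewrite /rho; field; rewrite lt0r_neq0.
  have h : nq * nt * (2 * K) < rho * (2 * K) by rewrite ltr_pM2r // mulr_gt0.
  rewrite e1 in h.
  suff : nq * (nt * K * 2) < nq * eta by rewrite ltr_pM2l.
  have -> : nq * (nt * K * 2) = nq * nt * (2 * K) by ring.
  by rewrite [nq * eta]mulrC.
exists (t1 - t2 / b2 * b1), (t2 / b2); split.
  have h1 : `|t1| <= nt := sqrt_ge_l _ _ _.
  have h2 : `|t2| <= nt := sqrt_ge_r _ _ _.
  have hD : `|t2 / b2| <= nt / `|b2|.
    by rewrite normrM normrV ?unitfE // ler_pM2r ?invr_gt0.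
  have hd1 : `|t1 - t2 / b2 * b1| <= nt + nt / `|b2| * `|b1|.
    apply: le_trans (ler_normB _ _) _; rewrite normrM.
    by apply: lerD => //; rewrite ler_wpM2r.
  have hKe : nt * K = nt + nt / `|b2| + nt / `|b2| * `|b1|.
    by rewrite /K; field; rewrite lt0r_neq0.
  have hntK0 : 0 <= nt * K by rewrite mulr_ge0 ?sqrtr_ge0 // ltW.
  move: hd1 hD hKe hntK0 hntK.
  set X := nt / `|b2|; set Y := `|t2 / b2|; set Z := nt * K.
  move=> *; lra.
suff -> : ((((t1 - t2 / b2 * b1)%:C)%C + ((t2 / b2)%:C)%C * ((b1 +i* b2)%C : CC R))
   = (t1 +i* t2)%C) by rewrite -Hq ht addrC subrK.
apply/eqP; rewrite eq_complex /=; apply/andP; split; apply/eqP; field => //.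
Qed.

Lemma hornerP (R : realType) (q : {poly CC R}) (c1 c2 z : CC R) :
  (q * (c1%:P + c2%:P * 'X^2)).[z] = q.[z] * (c1 + c2 * z^+2).
Proof. by rewrite hornerM hornerD hornerC hornerCM hornerXn. Qed.

Theorem lemma3p3 (R : realType) (F : set (CC R -> CC R))
    (sn : nat -> (CC R -> CC R) -> R) (E : set (CC R))
    (hF : frechet_space F sn) (hE : E_set E)
    (f : CC R -> CC R) (A : set (CC R)) (b : CC R) :
  F f -> finite_set A ->
  (A `<=` f @^-1` E \/ ~ sym_set A b) ->
  forall eps : R, 0 < eps ->
    exists2 g, F_fix F f A g & dF sn f g < eps /\ E (g b).
Proof.
move=> Ff finA hyp eps eps0.
have [s As] := (finite_seqP A).1 finA.
case: (pselect (sym_set A b)) => [symb | nsymb].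
  have AfE : A `<=` f @^-1` E by case: hyp.
  exists f; first by split => // a _.
  split.
    have M0 : forall j : nat, (0 : R) <= (fun _ => 0) j by [].
    have [eta eta0 H] := series_small _ (fun _ => 0) M0 _ eps0.
    rewrite /dF; apply: (H _ 0) => // j.
    have -> : (fun z => f z - f z) = (fun z => ((0:R)%:C)%C * f z).
      by apply/funext => z; rewrite subrr mul0r.
    by rewrite (fs_sn_hom hF) // normr0 !mul0r lexx.
  case: symb => [[[Ab|[a Aa <-]]|[a Aa <-]]|[a Aa <-]].
  - exact: AfE.
  - by rewrite (fs_real hF) //; apply: E_sym_real => //; exact: AfE.
  - by rewrite (fs_even hF) //; exact: AfE.
  - rewrite (fs_even hF) // (fs_real hF) //.
    by apply: E_sym_real => //; exact: AfE.
pose q := qpoly s.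
have FQ1 : F (horner q).
  by apply: (fs_poly hF); [exact: qpoly_real | exact: qpoly_even].
have FQ2 : F (horner (q * 'X^2)).
  by apply: (fs_poly hF); [exact: qpolyX_real | exact: qpolyX_even].
pose M := fun j => sn j (horner q) + sn j (horner (q * 'X^2)).
have M0 : forall j, 0 <= M j by move=> j; rewrite addr_ge0 // (fs_sn_ge0 hF).
have [eta eta0 Heta] := series_small _ M M0 _ eps0.
have qb0 : q.[b] != 0.
  apply: qpoly_neq0 => a ains.
  have Aa : A a by rewrite As.
  split; apply/eqP => hb; apply: nsymb; rewrite hb.
  - by left; left; left.
  - by left; right; exists a.
  - by left; left; right; exists a.
  - by right; exists a.
have [d1 [d2 [hd Eb]]] : exists d1 d2 : R, `|d1| + `|d2| < eta /\
    E (f b + q.[b] * ((d1%:C)%C + (d2%:C)%C * b^+2)).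
  case: (pselect (on_axes b)) => [axb | naxb].
    have bconj : b^* = b \/ b^* = - b.
      case: axb => [breal | bre]; first by left; exact: conj_Creal.
      right; move: bre; rewrite ReE => /eqP.
      rewrite mulf_eq0 invr_eq0 pnatr_eq0 orbF addr_eq0 => /eqP hb.
      by rewrite {2}hb opprK.
    have fbr : (f b)^* = f b.
      by rewrite -(fs_real hF) //; case: bconj => ->; rewrite ?(fs_even hF).
    have qbr : (q.[b])^* = q.[b].
      by rewrite -qpoly_real; case: bconj => ->; rewrite ?qpoly_even.
    have u0 : complex.Re q.[b] != 0.
      apply: contra qb0; rewrite (@conj_real _ _ qbr) => /eqP ->; by [].
    have [d1 [hd1 Ed]] := value_axes _ _ hE (complex.Re (f b)) _ _ eta0 u0.
    exists d1, 0; split; first by rewrite normr0 addr0.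
    by rewrite mul0r addr0 {1}(@conj_real _ _ fbr) {1}(@conj_real _ _ qbr).
  move: naxb; case Hb : b => [x y] naxb.
  have x0 : x != 0.
    by apply/eqP => x0; apply: naxb; right; rewrite ReC x0.
  have y0 : y != 0.
    by apply/eqP => y0; apply: naxb; left; rewrite complex_real y0.
  have hb2 : ((x +i* y)%C : CC R) ^+ 2 = ((x * x - y * y) +i* (x * y + y * x))%C by [].
  have b20 : x * y + y * x != 0.
    by rewrite [y * x]mulrC -mulr2n -mulr_natr !mulf_neq0 // pnatr_eq0.
  have qb0' : q.[(x +i* y)%C] != 0 by rewrite -Hb.
  have [d1 [d2 [hd Ed]]] := value_gen _ _ hE (f (x +i* y)%C) _ (x * x - y * y) _ _ eta0 qb0' b20.
  by exists d1, d2; rewrite hb2.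
pose L : {poly CC R} := ((d1%:C)%C)%:P + ((d2%:C)%C)%:P * 'X^2.
pose P := q * L.
have hPfun : horner P = (fun z => ((d1%:C)%C) * q.[z] + ((d2%:C)%C) * (q * 'X^2).[z]).
  by apply/funext => z; rewrite /P /L hornerP hornerMX2; ring.
have FP : F (horner P).
  rewrite hPfun; apply: (fs_add hF); exact: (fs_scale hF).
exists (f + horner P).
  split; first exact: (fs_add hF).
  move=> a Aa.
  have ains : a \in s by rewrite As in Aa.
  have [r hr] := @qpoly_root _ _ _ ains.
  have [h0 h1] := root2_horner _ a (r * L).
  have hPa : P = ('X - a%:P)^+2 * (r * L) by rewrite /P /q hr mulrA.
  split.
    have -> : (f + horner P) a = f a + P.[a] by []. by rewrite hPa h0 addr0.
  rewrite deriveD; [|exact: (fs_entire hF)|exact: derivable_hornerK].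
  by rewrite derive_hornerK hPa h1 addr0.
split.
  rewrite /dF; apply: (Heta _ (`|d1| + `|d2|)) => //.
  move=> j.
  have -> : (fun z => f z - (f + horner P) z) =
      (fun z => ((- d1)%:C)%C * q.[z] + ((- d2)%:C)%C * (q * 'X^2).[z]).
    apply/funext => z; change (f z - (f z + P.[z]) = ((- d1)%:C)%C * q.[z] + ((- d2)%:C)%C * (q * 'X^2).[z]); rewrite /P /L hornerP hornerMX2 !rmorphN /=; ring.
  have Fs1 : F (fun z => ((- d1)%:C)%C * q.[z]) by exact: (fs_scale hF).
  have Fs2 : F (fun z => ((- d2)%:C)%C * (q * 'X^2).[z]) by exact: (fs_scale hF).
  apply/andP; split.
    by apply: (fs_sn_ge0 hF); apply: (fs_add hF).
  apply: le_trans (fs_sn_triangle hF j Fs1 Fs2) _.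
  rewrite !(fs_sn_hom hF) // !normrN /M.
  have s1 := fs_sn_ge0 hF j FQ1; have s2 := fs_sn_ge0 hF j FQ2.
  have n1 := normr_ge0 d1; have n2 := normr_ge0 d2.
  rewrite mulrDl !mulrDr.
  have p1 := mulr_ge0 n1 s2; have p2 := mulr_ge0 n2 s1.
  lra.
by change (E (f b + P.[b])); rewrite /P /L hornerP.
Qed.
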